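(* Let $X$ be a compact Hausdorff space. Then $X$ is discrete homogeneous if and only if $X$ is $n$-homogeneous for every positive integer $n$; and $X$ is strongly discrete homogeneous if and only if $X$ is strongly $n$-homogeneous for every positive integer $n$.
   Context: $X$ is $n$-homogeneous if for any two subsets $A,B\subseteq X$ of cardinality $n$ there is a homeomorphism $f\colon X\to X$ with $f(A)=B$; it is strongly $n$-homogeneous if every bijection between subsets of cardinality $n$ extends to a homeomorphism $X\to X$. A subset $D$ of $X$ is discrete if each point of $X$ has a neighbourhood containing at most one point of $D$. A Hausdorff space $X$ is discrete homogeneous (DH) if for any two discrete subsets $A,B$ with $|A|=|B|$ there is a homeomorphism $f\colon X\to X$ with $f(A)=B$; it is strongly discrete homogeneous (sDH) if for any two discrete subsets $A,B$ and any bijection $f\colon A\to B$, $f$ extends to a homeomorphism of $X$. *)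

(* Defs.v *)
From HB Require Import structures.
From mathcomp Require Import all_boot all_order all_algebra.
From mathcomp Require Import all_classical all_reals all_analysis.
Set Implicit Arguments. Unset Strict Implicit. Unset Printing Implicit Defensive.
Local Open Scope classical_set_scope.

Definition homeo {T : topologicalType} (f : T -> T) : Prop :=
  exists g : T -> T, [/\ cancel f g, cancel g f, continuous f & continuous g].

Definition n_homogeneous (T : topologicalType) (n : nat) : Prop :=
  forall A B : set T, (A #= `I_n)%card -> (B #= `I_n)%card ->
    exists h : T -> T, homeo h /\ h @` A = B.

Definition strongly_n_homogeneous (T : topologicalType) (n : nat) : Prop :=
  forall (A B : set T) (f : T -> T), (A #= `I_n)%card -> (B #= `I_n)%card ->
    set_bij A B f ->
    exists h : T -> T, homeo h /\ (forall a, A a -> h a = f a).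

Definition discrete_subset {T : topologicalType} (D : set T) : Prop :=
  forall x : T, exists U : set T, nbhs x U /\
    (forall a b, D a -> D b -> U a -> U b -> a = b).

Definition discrete_homogeneous (T : topologicalType) : Prop :=
  hausdorff_space T /\
  forall A B : set T, discrete_subset A -> discrete_subset B ->
    (A #= B)%card -> exists h : T -> T, homeo h /\ h @` A = B.

Definition strongly_discrete_homogeneous (T : topologicalType) : Prop :=
  hausdorff_space T /\
  forall (A B : set T) (f : T -> T), discrete_subset A -> discrete_subset B ->
    set_bij A B f ->
    exists h : T -> T, homeo h /\ (forall a, A a -> h a = f a).

(* Main.v *)
Require Import Defs.
From HB Require Import structures.
From mathcomp Require Import all_boot all_order all_algebra.
From mathcomp Require Import all_classical all_reals all_analysis.
Local Open Scope classical_set_scope.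

Lemma homeo_id (T : topologicalType) : homeo (@id T).
Proof. by exists id; split => // x; apply: cvg_id. Qed.

Section PT.
Variables (T : topologicalType) (x0 : T).
Definition pT : Type := T.
HB.instance Definition _ := Topological.copy pT T.
HB.instance Definition _ := isPointed.Build pT x0.
Lemma compact_cover_pT : compact [set: T] -> cover_compact [set: pT].
Proof. move=> cT. rewrite -compact_cover. exact: cT. Qed.
End PT.

Lemma finite_of_discrete (T : topologicalType) (D : set T) :
  compact [set: T] -> discrete_subset D -> finite_set D.
Proof.
move=> cT dD; have [U HU] := choice dD.
have [[d Dd]|D0] := pselect (D !=set0); last first.
  suff -> : D = set0 by exact: finite_set0.
  by apply/eqP; apply: contrapT => H; apply: D0; apply/set0P; apply/negP.
have := @compact_cover_pT T d cT => /(_ T setT (fun x => interior (U x))).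
case.
- by move=> x _; exact: open_interior.
- by move=> x _; exists x => //; exact: (HU x).1.
move=> F _ cov.
pose g x := xget x (D `&` U x).
apply: (sub_finite_set _ (finite_image g (finite_fset F))).
move=> e De; have [x Fx Ux] := cov e I; exists x => //.
have Ue : U x e by exact: nbhs_singleton Ux.
rewrite /g; case: xgetP => [y -> [Dy Uy]|/(_ e) []//].
exact: (HU x).2.
Qed.

Lemma discrete_of_finite (T : topologicalType) (D : set T) :
  hausdorff_space T -> finite_set D -> discrete_subset D.
Proof.
move=> hT fD x.
have cl : closed (D `\ x).
  by move: (hausdorff_accessible hT) => /accessible_finite_set_closed; apply; exact: finite_setD.
exists (~` (D `\ x)); split.
  apply: open_nbhs_nbhs; split; first exact: closed_openC.
  by move=> [_]; apply.
have H a : D a -> (~` (D `\ x)) a -> a = x.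
  by move=> Da Ua; apply: contrapT => ax; apply: Ua; split.
by move=> a b Da Db Ua Ub; rewrite (H a Da Ua) (H b Db Ub).
Qed.

Theorem mainTheorem11 (T : topologicalType) :
  hausdorff_space T -> compact [set: T] ->
  (discrete_homogeneous T <-> (forall n : nat, (0 < n)%N -> n_homogeneous T n)) /\
  (strongly_discrete_homogeneous T <->
     (forall n : nat, (0 < n)%N -> strongly_n_homogeneous T n)).
Proof.
move=> hT cT; split; split.
- move=> [_ dh] n _ A B hA hB.
  apply: dh.
  + by apply: discrete_of_finite => //; exists n.
  + by apply: discrete_of_finite => //; exists n.
  + exact: card_eq_trans hA (card_esym hB).
- move=> nh; split => // A B dA dB AB.
  have [n hn] := @finite_of_discrete T A cT dA.
  have hB : (B #= `I_n)%card := card_eq_trans (card_esym AB) hn.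
  case: n hn hB => [|n] hn hB.
  + rewrite II0 card_eq0 in hn; rewrite II0 card_eq0 in hB.
    move/eqP: hn => ->; move/eqP: hB => ->.
    by exists id; split; [exact: homeo_id|rewrite image_set0].
  + exact: (nh n.+1 erefl A B hn hB).
- move=> [_ sdh] n _ A B f hA hB bf.
  apply: (sdh A B f) => //.
  + by apply: discrete_of_finite => //; exists n.
  + by apply: discrete_of_finite => //; exists n.
- move=> nh; split => // A B f dA dB bf.
  have [n hn] := @finite_of_discrete T A cT dA.
  case: n hn => [|n] hn.
  + rewrite II0 card_eq0 in hn; move/eqP: hn => ->.
    by exists id; split; [exact: homeo_id|].
  + have eB : f @` A = B.
      have [_ _ sf] := bf; apply: surj_image_eq sf.
      exact: set_bij_sub bf.
    have hB : (B #= `I_n.+1)%card.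
      rewrite -eB; apply: card_eq_trans hn.
      by have [_ inj _] := bf; exact: inj_card_eq.
    exact: (nh n.+1 erefl A B f hn hB bf).
Qed.
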